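(* Consider the following MIMO flat-fading model. Fix integers $l_{\mathrm t},l_{\mathrm r},n\ge1$ and a known pilot matrix $S=[s_{t,k}]\in\mathbb{C}^{n\times l_{\mathrm t}}$. Let $\vec{\mathbf h}\sim\mathcal{CN}(\vec\mu_{\vec{\mathbf h}},\Sigma_{\vec{\mathbf h}})$ with $\Sigma_{\vec{\mathbf h}}$ positive definite, $\mathbf f_\delta\sim\mathcal N(\mu_{\mathbf f_\delta},\sigma^2_{\mathbf f_\delta})$ real, noise entries i.i.d. $\mathcal{CN}(0,1)$, all mutually independent, and $\vec{\mathbf y}=\grave X(\mathbf f_\delta)\vec{\mathbf h}+\vec{\mathbf n}$. Then the joint MAP estimation problem of channel and frequency offset, $\max_{(\vec h,f_\delta)\in\mathbb{C}^{l_{\mathrm r}l_{\mathrm t}}\times\mathbb R} f_{\vec{\mathbf h},\mathbf f_\delta,\vec{\mathbf y}}(\vec h,f_\delta,\vec y)$, decomposes into two separable problems: for every $\vec y$, a pair $(\hat{\vec h},\hat f_\delta)$ is a joint maximizer if and only if (1) $\hat f_\delta\in\arg\max_{f_\delta} f_{\vec{\mathbf y}|\mathbf f_\delta}(\vec y|f_\delta)f_{\mathbf f_\delta}(f_\delta)=\arg\max_{f_\delta}g(\vec y,f_\delta)$ (the individual MAP estimate of the frequency offset; it reduces to the ML estimate $\arg\max_{f_\delta}f_{\vec{\mathbf y}|\mathbf f_\delta}(\vec y|f_\delta)$ when $f_{\mathbf f_\delta}$ is taken constant, equivalently $\sigma^{-2}_{\mathbf f_\delta}=0$ in $g$), and (2)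 $\hat{\vec h}=\arg\max_{\vec h} f_{\vec{\mathbf h}|\vec{\mathbf y},\mathbf f_\delta}(\vec h|\vec y,\hat f_\delta)=\hat{\vec h}_{\mathrm{MMSE}}(\vec y,\hat f_\delta)$, where $\hat{\vec h}_{\mathrm{MMSE}}(\vec y,f_\delta)=A\grave X(f_\delta)^\dagger\big(\vec y-\grave X(f_\delta)\vec\mu_{\vec{\mathbf h}}\big)+\vec\mu_{\vec{\mathbf h}}$. Here $g(\vec y,f_\delta)=2\,\mathrm{Re}[\langle\grave X(f_\delta)^\dagger\vec y,\vec b\rangle]+(\grave X(f_\delta)^\dagger\vec y)^\dagger A(\grave X(f_\delta)^\dagger\vec y)-\frac12\sigma_{\mathbf f_\delta}^{-2}|f_\delta-\mu_{\mathbf f_\delta}|^2$.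
   Context: $y_{r,k}=e^{j2\pi \mathbf f_\delta(k-1)}\sum_{t=1}^{l_{\mathrm t}}s_{t,k}h_{r,t}+n_{r,k}$, $r=1..l_{\mathrm r}$, $k=1..n$. $\vec{\mathbf h}$ stacks $h_{r,t}$ in position $(r-1)l_{\mathrm t}+t$; $\vec{\mathbf y},\vec{\mathbf n}$ stack index $(r,k)$ in position $(r-1)n+k$. $F(f)=\mathrm{diag}(e^{j2\pi f(k-1)})_{k=1..n}$, $X(f)=F(f)S$, $\grave X(f)=I_{l_{\mathrm r}}\otimes X(f)$, $\grave S=I_{l_{\mathrm r}}\otimes S$. $A=(\grave S^\dagger\grave S+\Sigma_{\vec{\mathbf h}}^{-1})^{-1}$, $\vec b=(I-A\grave S^\dagger\grave S)\vec\mu_{\vec{\mathbf h}}$. $f_{\vec{\mathbf h},\mathbf f_\delta,\vec{\mathbf y}}$ is the joint density, $f_{\vec{\mathbf h}|\vec{\mathbf y},\mathbf f_\delta}$, $f_{\vec{\mathbf y}|\mathbf f_\delta}$ conditional densities, $f_{\mathbf f_\delta}$ the prior density. $\langle u,v\rangle=v^\dagger u$. *)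

(* Defs.v *)
From mathcomp Require Import all_boot all_order all_algebra.
From mathcomp Require Import complex mxtens.
From mathcomp Require Import reals sequences exp trigo.
Set Implicit Arguments.
Unset Strict Implicit.
Unset Printing Implicit Defensive.
Import GRing.Theory Num.Theory.
Local Open Scope ring_scope.

Section MIMO.
Context {R : realType}.
Local Notation C := (R[i]).

Definition reC (z : C) : R := complex.Re z.

Definition ctr {m p : nat} (M : 'M[C]_(m, p)) : 'M[C]_(p, m) :=
  (map_mx (@conjc R) M)^T.

Definition ejay (x : R) : C := Complex (cos x) (sin x).

Definition herm_posdef {N : nat} (M : 'M[C]_N) : Prop :=
  ctr M = M /\ forall v : 'cV[C]_N, v != 0 -> 0 < reC ((ctr v *m M *m v) 0 0).

(* F(f) = diag(e^{j 2 pi f (k-1)})_{k=1..n}  (0-based k here) *)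
Definition Fmx (n : nat) (f : R) : 'M[C]_n :=
  diag_mx (\row_(k < n) ejay (2 * pi * f * (k%:R))).

Definition Xmx {n lt : nat} (S : 'M[C]_(n, lt)) (f : R) : 'M[C]_(n, lt) :=
  Fmx n f *m S.

(* grave X(f) = I_{lr} (x) X(f); row index r*n+k, column index r*lt+t *)
Definition Xgr (lr : nat) {n lt : nat} (S : 'M[C]_(n, lt)) (f : R)
  : 'M[C]_(lr * n, lr * lt) := (1%:M : 'M[C]_lr) *t Xmx S f.

Definition Sgr (lr : nat) {n lt : nat} (S : 'M[C]_(n, lt))
  : 'M[C]_(lr * n, lr * lt) := (1%:M : 'M[C]_lr) *t S.

Definition cn_density {N : nat} (mu : 'cV[C]_N) (Sig : 'M[C]_N) (x : 'cV[C]_N) : R :=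
  expR (- reC ((ctr (x - mu) *m invmx Sig *m (x - mu)) 0 0))
  / (pi ^+ N * reC (\det Sig)).

Definition gauss_density (mu s2 x : R) : R :=
  expR (- (x - mu) ^+ 2 / (2 * s2)) / Num.sqrt (2 * pi * s2).

Context (lt lr n : nat) (S : 'M[C]_(n, lt))
        (mu_h : 'cV[C]_(lr * lt)) (Sig_h : 'M[C]_(lr * lt))
        (mu_f s2_f : R).

Definition f_h (h : 'cV[C]_(lr * lt)) : R := cn_density mu_h Sig_h h.
Definition f_f (f : R) : R := gauss_density mu_f s2_f f.

Definition f_y_hf (y : 'cV[C]_(lr * n)) (h : 'cV[C]_(lr * lt)) (f : R) : R :=
  cn_density (Xgr lr S f *m h) 1%:M y.

Definition f_joint (h : 'cV[C]_(lr * lt)) (f : R) (y : 'cV[C]_(lr * n)) : R :=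
  f_y_hf y h f * f_h h * f_f f.

Definition f_y_f (y : 'cV[C]_(lr * n)) (f : R) : R :=
  cn_density (Xgr lr S f *m mu_h)
             (Xgr lr S f *m Sig_h *m ctr (Xgr lr S f) + 1%:M) y.

Definition f_h_yf (h : 'cV[C]_(lr * lt)) (y : 'cV[C]_(lr * n)) (f : R) : R :=
  f_joint h f y / (f_y_f y f * f_f f).

Definition Amx : 'M[C]_(lr * lt) :=
  invmx (ctr (Sgr lr S) *m Sgr lr S + invmx Sig_h).
Definition bvec : 'cV[C]_(lr * lt) :=
  (1%:M - Amx *m ctr (Sgr lr S) *m Sgr lr S) *m mu_h.

(* g(y, f); <u, v> = v^dag u *)
Definition gfun (y : 'cV[C]_(lr * n)) (f : R) : R :=
  let u := ctr (Xgr lr S f) *m y in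
  2 * reC ((ctr bvec *m u) 0 0) + reC ((ctr u *m Amx *m u) 0 0)
  - 2^-1 * s2_f^-1 * (f - mu_f) ^+ 2.

Definition h_mmse (y : 'cV[C]_(lr * n)) (f : R) : 'cV[C]_(lr * lt) :=
  Amx *m ctr (Xgr lr S f) *m (y - Xgr lr S f *m mu_h) + mu_h.

End MIMO.

(* Main.v *)
Require Import Defs.
From mathcomp Require Import all_boot all_order all_algebra.
From mathcomp Require Import complex mxtens.
From mathcomp Require Import reals sequences exp trigo.
From mathcomp Require Import ring lra.
Import Order.TTheory GRing.Theory Num.Theory.
Local Open Scope ring_scope.

Section Mx.
Variable R : realType.
Local Notation C := (R[i]).

Lemma ctrM m p q (A : 'M[C]_(m, p)) (B : 'M[C]_(p, q)) :
  ctr (A *m B) = ctr B *m ctr A.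
Proof. by rewrite /ctr map_mxM trmx_mul. Qed.

Lemma ctrD m p (A B : 'M[C]_(m, p)) : ctr (A + B) = ctr A + ctr B.
Proof. by apply/matrixP => i j; rewrite !mxE rmorphD. Qed.

Lemma ctrN m p (A : 'M[C]_(m, p)) : ctr (- A) = - ctr A.
Proof. by apply/matrixP => i j; rewrite !mxE rmorphN. Qed.

Lemma ctrB m p (A B : 'M[C]_(m, p)) : ctr (A - B) = ctr A - ctr B.
Proof. by rewrite ctrD ctrN. Qed.

Lemma ctrK m p (A : 'M[C]_(m, p)) : ctr (ctr A) = A.
Proof. by apply/matrixP => i j; rewrite !mxE conjcK. Qed.

Lemma ctr1 m : ctr (1%:M : 'M[C]_m) = 1%:M.
Proof. by apply/matrixP => i j; rewrite !mxE rmorphMn rmorph1 eq_sym. Qed.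

Lemma ctr_inv m (A : 'M[C]_m) : ctr (invmx A) = invmx (ctr A).
Proof. by rewrite /ctr map_invmx trmx_inv. Qed.

Lemma ctr_tens m n p q (A : 'M[C]_(m, n)) (B : 'M[C]_(p, q)) :
  ctr (A *t B) = ctr A *t ctr B.
Proof. by rewrite /ctr map_mxT trmx_tens. Qed.

Lemma tens11 m n : (1%:M : 'M[C]_m) *t (1%:M : 'M[C]_n) = 1%:M.
Proof.
apply/matrixP => i j.
case: (mxtens_indexP i) => i0 i1; case: (mxtens_indexP j) => j0 j1.
rewrite tensmxE !mxE (can_eq (@mxtens_indexK _ _)) xpair_eqE -natrM mulnb.
by [].
Qed.

Lemma ctr00 m (A : 'M[C]_(1, m)) (B : 'M[C]_(m, 1)) :
  (ctr (A *m B)) 0 0 = conjc ((A *m B) 0 0).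
Proof. by rewrite !mxE. Qed.

Lemma reCD (a b : C) : reC (a + b) = reC a + reC b.
Proof. by case: a; case: b. Qed.
Lemma reCN (a : C) : reC (- a) = - reC a.
Proof. by case: a. Qed.
Lemma reCB (a b : C) : reC (a - b) = reC a - reC b.
Proof. by rewrite reCD reCN. Qed.
Lemma reCconj (a : C) : reC (conjc a) = reC a.
Proof. by case: a. Qed.


Lemma form_ge0 m (w : 'cV[C]_m) : 0 <= (ctr w *m w) 0 0.
Proof.
rewrite mxE; apply: sumr_ge0 => k _; rewrite !mxE mulrC.
exact: (@mul_conjC_ge0 C).
Qed.

Lemma form_eq0 m (w : 'cV[C]_m) : (ctr w *m w) 0 0 = 0 -> w = 0.
Proof.
rewrite mxE => /eqP; rewrite psumr_eq0; last first.
  by move=> k _; rewrite !mxE mulrC; exact: (@mul_conjC_ge0 C).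
move=> /allP H; apply/matrixP => k j; rewrite [j]ord1 mxE.
have /H : k \in index_enum 'I_m by rewrite mem_index_enum.
by rewrite /= !mxE mulrC (@mul_conjC_eq0 C) => /eqP.
Qed.

Lemma reC_ge0 (z : C) : 0 <= z -> 0 <= reC z.
Proof. by rewrite lecE => /andP[]. Qed.
Lemma reC_gt0 (z : C) : 0 < z -> 0 < reC z.
Proof. by rewrite ltcE => /andP[]. Qed.

Lemma inj_unit m (M : 'M[C]_m) :
  (forall v : 'cV_m, M *m v = 0 -> v = 0) -> M \in unitmx.
Proof.
move=> H; rewrite -unitmx_tr -row_free_unit -kermx_eq0; apply/eqP/matrixP => i j.
have: row i (kermx M^T) *m M^T = 0 by rewrite -row_mul mulmx_ker row0.
move=> /(congr1 trmx); rewrite trmx_mul trmxK trmx0 => /H /(congr1 trmx).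
by rewrite trmxK trmx0 => /rowP /(_ j); rewrite !mxE.
Qed.

Definition pd m (M : 'M[C]_m) :=
  forall v : 'cV_m, v != 0 -> 0 < reC ((ctr v *m M *m v) 0 0).

Arguments pd {m}.

Lemma pd_unit m (M : 'M[C]_m) : pd M -> M \in unitmx.
Proof.
move=> H; apply: inj_unit => v Mv0; apply/eqP; apply/negPn/negP => /H.
by rewrite -mulmxA Mv0 mulmx0 mxE /= Order.POrderTheory.ltxx.
Qed.

Lemma diag_entry m (A : 'M[C]_m) (B : 'M[C]_m) i :
  (A *m ctr B) i i = (row i A *m ctr (row i B)) 0 0.
Proof.
rewrite !mxE; apply: eq_bigr => k _; rewrite !mxE //.
Qed.

Lemma det_pd m (M : 'M[C]_m) : ctr M = M -> pd M -> 0 < reC (\det M).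
Proof.
move=> hM pdM.
have herm : M \is hermsymmx.
  apply/is_hermitianmxP; rewrite expr0 scale1r -map_trmx; exact: (esym hM).
have /orthomx_spectralP eqM := hermitian_normalmx herm.
have Pu := spectral_unitarymx M.
set P := spectralmx M in eqM Pu; set d := spectral_diag M in eqM.
have dreal := hermitian_spectral_diag_real herm.
have PP : P *m ctr P = 1%:M by rewrite /ctr map_trmx; exact/unitarymxP.
have iP : invmx P = ctr P by rewrite /ctr map_trmx; exact: invmx_unitary.
have Punit : P \in unitmx by exact: unitarymx_unit.
have -> : \det M = \prod_i d 0 i.
  rewrite eqM !det_mulmx det_diag mulrC mulrA -det_mulmx mulmxV // det1 mul1r //.
have PMP : P *m M *m ctr P = diag_mx d.
  by rewrite eqM -iP !mulmxA mulmxV // mul1mx mulmxK.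
apply: reC_gt0; apply: prodr_gt0 => i _.
have di : d 0 i = (ctr (ctr (row i P)) *m M *m ctr (row i P)) 0 0.
  by rewrite ctrK -row_mul -diag_entry PMP mxE eqxx mulr1n.
have vnz : ctr (row i P) != 0.
  apply/eqP => h0.
  have := @diag_entry m P P i; rewrite PP h0 mulmx0 !mxE eqxx => /eqP.
  by rewrite oner_eq0.
have := pdM _ vnz; rewrite -di.
have /mxOverP /(_ 0 i) /complex_realP [k ->] := dreal.
by rewrite ltcE /= eqxx.
Qed.


Lemma ejayK (x : R) : conjc (ejay x) * ejay x = 1.
Proof.
rewrite /ejay /=; apply/eqP; rewrite eq_complex /=.
by rewrite mulNr opprK -!expr2 cos2Dsin2 mulNr [sin x * _]mulrC subrr !eqxx.
Qed.

Lemma FF n0 (f : R) : ctr (Fmx n0 f) *m Fmx n0 f = 1%:M.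
Proof.
apply/matrixP => i j; rewrite !mxE.
rewrite (bigD1 j) //= big1 ?addr0; last first.
  by move=> k /negbTE kj; rewrite !mxE kj mulr0n mulr0.
rewrite !mxE eqxx mulr1n rmorphMn /=.
case: (eqVneq i j) => [eij|ij]; first by subst i; rewrite mulr1n ejayK.
by rewrite !mulr0n mul0r.
Qed.

Lemma FF' n0 (f : R) : Fmx n0 f *m ctr (Fmx n0 f) = 1%:M.
Proof. exact: mulmx1C (FF n0 f). Qed.

Lemma form00D m (a : 'cV[C]_m) (M1 M2 : 'M[C]_m) (b : 'cV[C]_m) :
  (ctr a *m (M1 + M2) *m b) 0 0 = (ctr a *m M1 *m b) 0 0 + (ctr a *m M2 *m b) 0 0.
Proof. by rewrite mulmxDr mulmxDl mxE. Qed.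

Lemma e00D (A B : 'M[C]_1) : (A + B) 0 0 = A 0 0 + B 0 0.
Proof. by rewrite mxE. Qed.
Lemma e00N (A : 'M[C]_1) : (- A) 0 0 = - A 0 0.
Proof. by rewrite mxE. Qed.
Lemma e00B m p (A B : 'M[C]_(m, p)) i j : (A - B) i j = A i j - B i j.
Proof. by rewrite !mxE. Qed.

Lemma qexp m (a b : 'cV[C]_m) (M : 'M[C]_m) :
  (ctr (a - b) *m M *m (a - b)) 0 0 =
  (ctr a *m M *m a) 0 0 - (ctr a *m M *m b) 0 0
  - (ctr b *m M *m a) 0 0 + (ctr b *m M *m b) 0 0.
Proof.
rewrite ctrB mulmxBl mulmxBl mulmxBr mulmxBr.
move: (ctr a *m M *m a) (ctr a *m M *m b) (ctr b *m M *m a) (ctr b *m M *m b).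
move=> p1 p2 p3 p4; rewrite !e00B; ring.
Qed.

Lemma conj_form m p (a : 'cV[C]_m) (M : 'M[C]_(m, p)) (b : 'cV[C]_p) :
  reC ((ctr b *m ctr M *m a) 0 0) = reC ((ctr a *m M *m b) 0 0).
Proof. by rewrite -ctrM -{1}[a]ctrK -ctrM ctr00 reCconj mulmxA. Qed.

Variables (lt lr n : nat) (S : 'M[C]_(n, lt)) (mu_h : 'cV[C]_(lr * lt))
  (Sig_h : 'M[C]_(lr * lt)).
Hypothesis HSig : herm_posdef Sig_h.

Local Notation Xf f := (Xgr lr S f).
Local Notation Sg := (Sgr lr S).
Local Notation G := (ctr Sg *m Sg).
Local Notation Si := (invmx Sig_h).
Local Notation B := (G + Si).
Local Notation A := (Amx S Sig_h).
Definition Dm f : 'M[C]_(lr * n) := (1%:M : 'M[C]_lr) *t Fmx n f.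

Lemma XD f : Xf f = Dm f *m Sg.
Proof. by rewrite /Xgr /Sgr /Dm /Xmx tensmx_mul mul1mx. Qed.

Lemma DD f : Dm f *m ctr (Dm f) = 1%:M.
Proof. by rewrite /Dm ctr_tens tensmx_mul ctr1 mul1mx FF' tens11. Qed.

Lemma XX f : ctr (Xf f) *m Xf f = G.
Proof.
rewrite /Xgr /Sgr /Xmx !ctr_tens !tensmx_mul ctr1 !mul1mx.
by rewrite ctrM mulmxA -(mulmxA (ctr S)) FF mulmx1.
Qed.

Lemma Sig_unit : Sig_h \in unitmx.
Proof. by apply: pd_unit; case: HSig. Qed.

Lemma ctrSi : ctr Si = Si.
Proof. by rewrite ctr_inv; case: HSig => ->. Qed.

Lemma pdSi : pd Si.
Proof.
move=> v vnz.
have wnz : Si *m v != 0.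
  by apply: contraNneq vnz => h0; rewrite -(mulKVmx Sig_unit v) h0 mulmx0.
have := (HSig.2 _ wnz).
by rewrite ctrM ctrSi -(mulmxA _ Sig_h) (mulKVmx Sig_unit).
Qed.

Lemma ctrG : ctr G = G.
Proof. by rewrite ctrM ctrK. Qed.

Lemma ctrB_ : ctr B = B.
Proof. by rewrite ctrD ctrG ctrSi. Qed.

Lemma pdB : pd B.
Proof.
move=> v vnz; rewrite form00D reCD.
have h1 := pdSi v vnz.
have h2 : 0 <= reC ((ctr v *m G *m v) 0 0).
  by rewrite mulmxA -ctrM -mulmxA; apply/reC_ge0/form_ge0.
lra.
Qed.

Lemma B_unit : B \in unitmx.
Proof. exact: pd_unit pdB. Qed.

Lemma AB : A *m B = 1%:M.
Proof. by rewrite /Amx mulVmx // B_unit. Qed.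
Lemma BA : B *m A = 1%:M.
Proof. by rewrite /Amx mulmxV // B_unit. Qed.
Lemma ctrA : ctr A = A.
Proof. by rewrite /Amx ctr_inv ctrB_. Qed.


Local Notation Msum f := (Xf f *m Sig_h *m ctr (Xf f) + 1%:M).
Local Notation Minv f := (1%:M - Xf f *m A *m ctr (Xf f)).
Local Notation Msum0 := (Sg *m Sig_h *m ctr Sg + 1%:M).

Lemma wood f : Msum f *m Minv f = 1%:M.
Proof.
have hG := XX f.
have SB : (Sig_h *m G + 1%:M) *m A = Sig_h.
  by rewrite -[1%:M](mulmxV Sig_unit) -mulmxDr -mulmxA BA mulmx1.
have E : Xf f *m Sig_h *m ctr (Xf f) =
         Xf f *m ((Sig_h *m G + 1%:M) *m A) *m ctr (Xf f) by rewrite SB.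
have H : Xf f *m Sig_h *m ctr (Xf f) *m (Xf f *m A *m ctr (Xf f))
         + Xf f *m A *m ctr (Xf f) = Xf f *m Sig_h *m ctr (Xf f).
  by rewrite {2}E mulmxDl mul1mx mulmxDr mulmxDl -hG !mulmxA.
rewrite mulmxDl mul1mx mulmxBr mulmx1 -{1}H.
by rewrite [_ + Xf f *m A *m ctr (Xf f)]addrC addrK addrC subrK.
Qed.

Lemma Msum_unit f : Msum f \in unitmx.
Proof. by case: (mulmx1_unit (wood f)). Qed.

Lemma invMsum f : invmx (Msum f) = Minv f.
Proof.
have := mulKmx (Msum_unit f) (Minv f).
by rewrite wood mulmx1.
Qed.

Lemma Msum_eq f : Msum f = Dm f *m Msum0 *m ctr (Dm f).
Proof.
rewrite XD ctrM mulmxDr mulmxDl mulmx1 DD !mulmxA //.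
Qed.

Lemma det_Msum f : \det (Msum f) = \det Msum0.
Proof.
rewrite Msum_eq !det_mulmx mulrC mulrA -det_mulmx.
by rewrite [ctr _ *m _]mulmx1C ?DD // det1 mul1r.
Qed.

Lemma form_gt0 m (v : 'cV[C]_m) : v != 0 -> 0 < reC ((ctr v *m v) 0 0).
Proof.
move=> vnz; apply: reC_gt0; rewrite lt_def form_ge0 andbT.
by apply/eqP => /form_eq0 /eqP; apply/negP.
Qed.

Lemma pdMsum0 : pd Msum0.
Proof.
move=> v vnz; rewrite form00D reCD mulmx1.
have h1 := @form_gt0 _ v vnz.
suff h2 : 0 <= reC ((ctr v *m (Sg *m Sig_h *m ctr Sg) *m v) 0 0) by lra.
have -> : ctr v *m (Sg *m Sig_h *m ctr Sg) *m v =
          ctr (ctr Sg *m v) *m Sig_h *m (ctr Sg *m v).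
  by rewrite ctrM ctrK !mulmxA.
case: (eqVneq (ctr Sg *m v) 0) => [->|nz].
  by rewrite mulmx0 mxE /=.
exact/ltW/(HSig.2 _ nz).
Qed.

Lemma ctrMsum0 : ctr Msum0 = Msum0.
Proof. by rewrite ctrD ctr1 !ctrM ctrK HSig.1 mulmxA. Qed.

Lemma detMsum0_gt0 : 0 < reC (\det Msum0).
Proof. exact: det_pd ctrMsum0 pdMsum0. Qed.


Lemma key_lin {L1 L2 R1 R2 T1 U1 U2 U3 V1 V2 V3 V4 W1 W2 W3 W4 : C} :
  L1 = T1 - U1 - U2 + U3 -> R1 = V1 - V2 - V3 + V4 -> U1 = W1 -> U2 = W2 ->
  U3 = W3 -> V1 = W3 + L2 -> V2 = W2 -> V3 = W1 -> V4 = W4 -> R2 = T1 - W4 ->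
  L1 + L2 = R1 + R2.
Proof. move=> -> -> -> -> -> -> -> -> -> ->; ring. Qed.

Lemma key y f h :
  reC ((ctr (y - Xf f *m h) *m invmx 1%:M *m (y - Xf f *m h)) 0 0)
  + reC ((ctr (h - mu_h) *m Si *m (h - mu_h)) 0 0)
  = reC ((ctr (h - h_mmse S mu_h Sig_h y f) *m B
            *m (h - h_mmse S mu_h Sig_h y f)) 0 0)
  + reC ((ctr (y - Xf f *m mu_h) *m invmx (Msum f) *m (y - Xf f *m mu_h)) 0 0).
Proof.
rewrite invmx1 invMsum -!reCD; congr reC.
have e1 : y - Xf f *m h = (y - Xf f *m mu_h) - Xf f *m (h - mu_h).
  by rewrite mulmxBr opprB addrA subrK.
have e2 : h - h_mmse S mu_h Sig_h y f
          = (h - mu_h) - A *m ctr (Xf f) *m (y - Xf f *m mu_h).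
  by rewrite /h_mmse opprD addrA addrAC.
rewrite e1 e2.
move: (y - Xf f *m mu_h) (h - mu_h) => r d.
have Be : B *m (A *m ctr (Xf f) *m r) = ctr (Xf f) *m r.
  by rewrite !mulmxA BA mul1mx.
have q1 := qexp _ r (Xf f *m d) 1%:M.
have q2 := qexp _ d (A *m ctr (Xf f) *m r) B.
have t1 : (ctr r *m 1%:M *m (Xf f *m d)) 0 0 = (ctr r *m Xf f *m d) 0 0.
  by rewrite mulmx1 mulmxA.
have t2 : (ctr (Xf f *m d) *m 1%:M *m r) 0 0 = (ctr d *m ctr (Xf f) *m r) 0 0.
  by rewrite mulmx1 ctrM.
have t3 : (ctr (Xf f *m d) *m 1%:M *m (Xf f *m d)) 0 0 = (ctr d *m G *m d) 0 0.
  by rewrite mulmx1 ctrM -(XX f) !mulmxA.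
have t4 : (ctr d *m B *m d) 0 0 = (ctr d *m G *m d) 0 0 + (ctr d *m Si *m d) 0 0.
  by rewrite form00D.
have t5 : (ctr d *m B *m (A *m ctr (Xf f) *m r)) 0 0
          = (ctr d *m ctr (Xf f) *m r) 0 0.
  by rewrite -mulmxA Be mulmxA.
have t6 : (ctr (A *m ctr (Xf f) *m r) *m B *m d) 0 0 = (ctr r *m Xf f *m d) 0 0.
  by rewrite -{1}ctrB_ -ctrM Be ctrM ctrK.
have t7 : (ctr (A *m ctr (Xf f) *m r) *m B *m (A *m ctr (Xf f) *m r)) 0 0
          = (ctr r *m (Xf f *m A *m ctr (Xf f)) *m r) 0 0.
  by rewrite -mulmxA Be !ctrM ctrK ctrA !mulmxA.
have t8 : (ctr r *m (1%:M - Xf f *m A *m ctr (Xf f)) *m r) 0 0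
   = (ctr r *m 1%:M *m r) 0 0 - (ctr r *m (Xf f *m A *m ctr (Xf f)) *m r) 0 0.
  by rewrite mulmxBr mulmxBl e00B.
exact: (key_lin q1 q2 t1 t2 t3 t4 t5 t6 t7 t8).
Qed.

Definition c0 (y : 'cV[C]_(lr * n)) : R :=
  - reC ((ctr y *m 1%:M *m y) 0 0) - reC ((ctr mu_h *m G *m mu_h) 0 0)
  + reC ((ctr (G *m mu_h) *m A *m (G *m mu_h)) 0 0).

Lemma gid_lin {Rr P1 P2 y1y Q1 Q2 Q3 uAu Z1 Z2 Z3 Bu Y1 Y2 mGm : C} :
  Rr = P1 - P2 -> P1 = y1y - Q1 - Q2 + Q3 -> P2 = uAu - Z1 - Z2 + Z3 ->
  Bu = Y1 - Y2 -> reC Q1 = reC Y1 -> Q2 = Y1 -> Q3 = mGm ->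
  reC Z1 = reC Z2 -> Z2 = Y2 ->
  - reC Rr = 2 * reC Bu + reC uAu + (- reC y1y - reC mGm + reC Z3).
Proof.
move=> E1 E2 E3 E4 h1 E6 E7 h4 E9.
rewrite E1 E2 E3 E4 E6 E7 !(reCD, reCN) h1 h4 E9; lra.
Qed.

Lemma gid y f :
  - reC ((ctr (y - Xf f *m mu_h) *m invmx (Msum f) *m (y - Xf f *m mu_h)) 0 0)
  = 2 * reC ((ctr (bvec S mu_h Sig_h) *m (ctr (Xf f) *m y)) 0 0)
    + reC ((ctr (ctr (Xf f) *m y) *m A *m (ctr (Xf f) *m y)) 0 0) + c0 y.
Proof.
have hb : ctr (bvec S mu_h Sig_h) = ctr mu_h - ctr mu_h *m (G *m A).
  by rewrite /bvec ctrM ctrB ctr1 -mulmxA ctrM ctrG ctrA mulmxBr mulmx1.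
have hu : ctr (Xf f) *m (y - Xf f *m mu_h) = ctr (Xf f) *m y - G *m mu_h.
  by rewrite mulmxBr mulmxA XX.
have f0 : (ctr (y - Xf f *m mu_h) *m invmx (Msum f) *m (y - Xf f *m mu_h)) 0 0
   = (ctr (y - Xf f *m mu_h) *m 1%:M *m (y - Xf f *m mu_h)) 0 0
     - (ctr (ctr (Xf f) *m (y - Xf f *m mu_h)) *m A
          *m (ctr (Xf f) *m (y - Xf f *m mu_h))) 0 0.
  rewrite invMsum; move: (y - Xf f *m mu_h) => r.
  by rewrite mulmxBr mulmxBl e00B ctrM ctrK !mulmxA.
have f2 := qexp _ y (Xf f *m mu_h) 1%:M.
have f3 : (ctr (ctr (Xf f) *m (y - Xf f *m mu_h)) *m A
          *m (ctr (Xf f) *m (y - Xf f *m mu_h))) 0 0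
   = (ctr (ctr (Xf f) *m y) *m A *m (ctr (Xf f) *m y)) 0 0
     - (ctr (ctr (Xf f) *m y) *m A *m (G *m mu_h)) 0 0
     - (ctr (G *m mu_h) *m A *m (ctr (Xf f) *m y)) 0 0
     + (ctr (G *m mu_h) *m A *m (G *m mu_h)) 0 0.
  by rewrite hu; exact: qexp.
have f4 : (ctr (bvec S mu_h Sig_h) *m (ctr (Xf f) *m y)) 0 0
   = (ctr mu_h *m (ctr (Xf f) *m y)) 0 0
     - (ctr mu_h *m (G *m A) *m (ctr (Xf f) *m y)) 0 0.
  by rewrite hb mulmxBl e00B.
have g1 : reC ((ctr y *m 1%:M *m (Xf f *m mu_h)) 0 0)
        = reC ((ctr mu_h *m (ctr (Xf f) *m y)) 0 0).
  by rewrite mulmx1 mulmxA -conj_form mulmxA.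
have g2 : (ctr (Xf f *m mu_h) *m 1%:M *m y) 0 0
        = (ctr mu_h *m (ctr (Xf f) *m y)) 0 0.
  by rewrite mulmx1 ctrM mulmxA.
have g3 : (ctr (Xf f *m mu_h) *m 1%:M *m (Xf f *m mu_h)) 0 0
        = (ctr mu_h *m G *m mu_h) 0 0.
  by rewrite mulmx1 ctrM -(XX f) !mulmxA.
have g4 : reC ((ctr (ctr (Xf f) *m y) *m A *m (G *m mu_h)) 0 0)
        = reC ((ctr (G *m mu_h) *m A *m (ctr (Xf f) *m y)) 0 0).
  by rewrite -conj_form ctrA.
have g5 : (ctr (G *m mu_h) *m A *m (ctr (Xf f) *m y)) 0 0
        = (ctr mu_h *m (G *m A) *m (ctr (Xf f) *m y)) 0 0.
  by rewrite ctrM ctrG !mulmxA.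
rewrite /c0; exact: (gid_lin f0 f2 f3 f4 g1 g2 g3 g4 g5).
Qed.


Lemma abs_main (T : Type) (hm : R -> T) (Q : T -> R -> R) (P : R -> R) (K1 : R)
  (J : T -> R -> R) :
  0 < K1 -> (forall f, 0 < P f) -> (forall h f, 0 <= Q h f) ->
  (forall h f, Q h f = 0 -> h = hm f) -> (forall f, Q (hm f) f = 0) ->
  (forall h f, J h f = expR (- Q h f) * P f * K1) ->
  (forall f hh, (forall h, J h f / P f <= J hh f / P f) <-> hh = hm f) /\
  (forall hh fh, (forall h f, J h f <= J hh fh) <->
                 ((forall f, P f <= P fh) /\ hh = hm fh)).
Proof.
move=> K1p Pp Qge Qeq Qhm HJ.
have JP h f : J h f / P f = expR (- Q h f) * K1.
  by rewrite HJ; field; apply/lt0r_neq0/Pp.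
have Ele h f : expR (- Q h f) <= 1.
  by rewrite -expR0 ler_expR oppr_le0.
have Q0 h f : 1 <= expR (- Q h f) -> h = hm f.
  rewrite -expR0 ler_expR oppr_ge0 => H; apply: Qeq.
  by apply/eqP; rewrite eq_le H Qge.
split.
  move=> f hh; split.
    move=> H; apply: Q0; have := H (hm f); rewrite !JP Qhm oppr0 expR0 mul1r.
    by rewrite -{1}[K1]mul1r ler_pM2r.
  move=> -> h; rewrite !JP Qhm oppr0 expR0 mul1r.
  by rewrite -{2}[K1]mul1r ler_pM2r.
move=> hh fh; split.
  move=> H.
  have Jle : J hh fh <= P fh * K1.
    by rewrite HJ -mulrA -{2}[P fh * K1]mul1r ler_pM2r ?mulr_gt0.
  split.
    move=> f; have := H (hm f) f; rewrite HJ Qhm oppr0 expR0 mul1r => Hf.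
    by rewrite -(ler_pM2r K1p); apply: le_trans Hf Jle.
  apply: Q0; have := H (hm fh) fh; rewrite HJ (HJ hh) Qhm oppr0 expR0 mul1r.
  by rewrite -mulrA -{1}[P fh * K1]mul1r ler_pM2r ?mulr_gt0.
move=> [Hf ->] h f; rewrite !HJ Qhm oppr0 expR0 mul1r.
apply: (@le_trans _ _ (P f * K1)).
  by rewrite -mulrA -{2}[P f * K1]mul1r ler_pM2r ?mulr_gt0.
by rewrite ler_pM2r.
Qed.


Variables (mu_f s2_f : R).
Hypothesis Hs2 : 0 < s2_f.

Lemma ff_gt0 f : 0 < f_f mu_f s2_f f.
Proof.
rewrite /f_f /gauss_density divr_gt0 ?expR_gt0 // sqrtr_gt0.
by rewrite !mulr_gt0 ?pi_gt0.
Qed.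

Lemma detSig_gt0 : 0 < reC (\det Sig_h).
Proof. by case: HSig => h1 h2; exact: det_pd. Qed.

Lemma fyf_gt0 y f : 0 < f_y_f S mu_h Sig_h y f.
Proof.
rewrite /f_y_f /cn_density det_Msum divr_gt0 ?expR_gt0 //.
by rewrite mulr_gt0 ?exprn_gt0 ?pi_gt0 ?detMsum0_gt0.
Qed.

Lemma dens_alg (a1 a2 a3 a4 p dS dM ff : R) (P N : nat) :
  a1 * a2 = a3 * a4 -> 0 < p -> 0 < dS -> 0 < dM ->
  a1 / (p ^+ P * reC 1) * (a2 / (p ^+ N * dS)) * ff
  = a3 * (a4 / (p ^+ P * dM) * ff) * (dM / (p ^+ N * dS)).
Proof.
move=> E pp dSp dMp.
have -> : reC 1 = 1 by [].
have pP : p ^+ P != 0 by rewrite expf_neq0 // lt0r_neq0.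
have pN : p ^+ N != 0 by rewrite expf_neq0 // lt0r_neq0.
have dS0 : dS != 0 by rewrite lt0r_neq0.
have dM0 : dM != 0 by rewrite lt0r_neq0.
transitivity (a1 * a2 * ff / (p ^+ P * p ^+ N * dS)).
  by field; rewrite dS0 pN pP.
rewrite E; field; by rewrite dS0 pN pP dM0.
Qed.

Definition K1 : R := reC (\det Msum0) / (pi ^+ (lr * lt) * reC (\det Sig_h)).
Definition Qf y (h : 'cV[C]_(lr * lt)) f : R :=
  reC ((ctr (h - h_mmse S mu_h Sig_h y f) *m B
          *m (h - h_mmse S mu_h Sig_h y f)) 0 0).

Lemma Jeq y h f :
  f_joint S mu_h Sig_h mu_f s2_f h f y =
  expR (- Qf y h f) * (f_y_f S mu_h Sig_h y f * f_f mu_f s2_f f) * K1.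
Proof.
rewrite /f_joint /f_y_hf /f_h /f_y_f /cn_density /K1 /Qf det_Msum det1.
apply: dens_alg; last exact: detMsum0_gt0; last exact: detSig_gt0;
  last exact: pi_gt0.
by rewrite -!expRD -!opprD (key y f h).
Qed.


Lemma p1_alg (x c z pp dM sq : R) :
  pp != 0 -> dM != 0 -> sq != 0 ->
  expR (x + c) / (pp * dM) * (expR (- z / (2 * s2_f)) / sq)
  = expR (x - 2^-1 * s2_f^-1 * z) * (expR c / (pp * dM * sq)).
Proof.
move=> pp0 dM0 sq0.
have -> : expR (x - 2^-1 * s2_f^-1 * z) = expR x * expR (- z / (2 * s2_f)).
  by rewrite -expRD invfM; congr expR; ring.
rewrite expRD; field; by rewrite sq0 dM0 pp0.
Qed.

Definition K2 y : R := expR (c0 y) /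
  (pi ^+ (lr * n) * reC (\det Msum0) * Num.sqrt (2 * pi * s2_f)).

Lemma K2_gt0 y : 0 < K2 y.
Proof.
rewrite /K2 divr_gt0 ?expR_gt0 // !mulr_gt0 ?exprn_gt0 ?pi_gt0 ?detMsum0_gt0 //.
by rewrite sqrtr_gt0 !mulr_gt0 ?pi_gt0.
Qed.

Lemma Peq y f :
  f_y_f S mu_h Sig_h y f * f_f mu_f s2_f f
  = expR (gfun S mu_h Sig_h mu_f s2_f y f) * K2 y.
Proof.
rewrite /f_y_f /cn_density det_Msum (gid y f) /f_f /gauss_density /gfun /= /K2.
apply: p1_alg.
- by rewrite expf_neq0 // lt0r_neq0 // pi_gt0.
- by rewrite lt0r_neq0 // detMsum0_gt0.
- by rewrite lt0r_neq0 // sqrtr_gt0 !mulr_gt0 ?pi_gt0.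
Qed.

Lemma mono_lemma (P g : R -> R) (K : R) : 0 < K ->
  (forall f, P f = expR (g f) * K) ->
  forall fh, (forall f, P f <= P fh) <-> (forall f, g f <= g fh).
Proof.
move=> Kp E fh; split => H f; have := H f; rewrite !E ler_pM2r //;
  by rewrite ler_expR.
Qed.

Lemma main_sec :
  (forall (y : 'cV[C]_(lr * n)) (fh : R),
     (forall f : R, f_y_f S mu_h Sig_h y f * f_f mu_f s2_f f
                    <= f_y_f S mu_h Sig_h y fh * f_f mu_f s2_f fh)
     <-> (forall f : R, gfun S mu_h Sig_h mu_f s2_f y f
                        <= gfun S mu_h Sig_h mu_f s2_f y fh)) /\
  (forall (y : 'cV[C]_(lr * n)) (f : R) (hh : 'cV[C]_(lr * lt)),
     (forall h, f_h_yf S mu_h Sig_h mu_f s2_f h y f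
                <= f_h_yf S mu_h Sig_h mu_f s2_f hh y f)
     <-> hh = h_mmse S mu_h Sig_h y f) /\
  (forall (y : 'cV[C]_(lr * n)) (hh : 'cV[C]_(lr * lt)) (fh : R),
     (forall (h : 'cV[C]_(lr * lt)) (f : R),
        f_joint S mu_h Sig_h mu_f s2_f h f y
        <= f_joint S mu_h Sig_h mu_f s2_f hh fh y)
     <-> ((forall f : R, f_y_f S mu_h Sig_h y f * f_f mu_f s2_f f
                         <= f_y_f S mu_h Sig_h y fh * f_f mu_f s2_f fh)
          /\ hh = h_mmse S mu_h Sig_h y fh)).
Proof.
have K1p : 0 < K1.
  by rewrite /K1 divr_gt0 ?detMsum0_gt0 // mulr_gt0 ?exprn_gt0 ?pi_gt0 ?detSig_gt0.
have Qge y h f : 0 <= Qf y h f.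
  rewrite /Qf; case: (eqVneq (h - h_mmse S mu_h Sig_h y f) 0) => [->|nz].
    by rewrite mulmx0 mxE.
  exact/ltW/pdB.
have Qeq y h f : Qf y h f = 0 -> h = h_mmse S mu_h Sig_h y f.
  rewrite /Qf; case: (eqVneq (h - h_mmse S mu_h Sig_h y f) 0) => [/eqP|nz].
    by rewrite subr_eq0 => /eqP.
  by move=> h0; have := pdB _ nz; rewrite h0 Order.POrderTheory.ltxx.
have Qhm y f : Qf y (h_mmse S mu_h Sig_h y f) f = 0.
  by rewrite /Qf subrr mulmx0 mxE.
have AB y := @abs_main _ (h_mmse S mu_h Sig_h y) (Qf y)
  (fun f => f_y_f S mu_h Sig_h y f * f_f mu_f s2_f f) K1
  (fun h f => f_joint S mu_h Sig_h mu_f s2_f h f y) K1p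
  (fun f => mulr_gt0 (fyf_gt0 y f) (ff_gt0 f)) (Qge y) (@Qeq y) (Qhm y)
  (fun h f => Jeq y h f).
split.
  move=> y fh.
  exact: (@mono_lemma (fun f => f_y_f S mu_h Sig_h y f * f_f mu_f s2_f f)
    (fun f => gfun S mu_h Sig_h mu_f s2_f y f) (K2 y) (K2_gt0 y) (Peq y) fh).
split.
  by move=> y f hh; rewrite /f_h_yf; exact: (AB y).1.
by move=> y hh fh; exact: (AB y).2.
Qed.

End Mx.

Theorem theorem2 (R : realType) (lt lr n : nat)
  (Hlt : (0 < lt)%N) (Hlr : (0 < lr)%N) (Hn : (0 < n)%N)
  (S : 'M[R[i]]_(n, lt))
  (mu_h : 'cV[R[i]]_(lr * lt)) (Sig_h : 'M[R[i]]_(lr * lt))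
  (HSig : herm_posdef Sig_h)
  (mu_f s2_f : R) (Hs2 : 0 < s2_f) :
  (* (1) the MAP objective for f_delta has the same maximizers as g *)
  (forall (y : 'cV[R[i]]_(lr * n)) (fh : R),
     (forall f : R, f_y_f S mu_h Sig_h y f * f_f mu_f s2_f f
                    <= f_y_f S mu_h Sig_h y fh * f_f mu_f s2_f fh)
     <-> (forall f : R, gfun S mu_h Sig_h mu_f s2_f y f
                        <= gfun S mu_h Sig_h mu_f s2_f y fh)) /\
  (* (2) the posterior of h given (y, f) is uniquely maximized by the MMSE *)
  (forall (y : 'cV[R[i]]_(lr * n)) (f : R) (hh : 'cV[R[i]]_(lr * lt)),
     (forall h, f_h_yf S mu_h Sig_h mu_f s2_f h y f
                <= f_h_yf S mu_h Sig_h mu_f s2_f hh y f)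
     <-> hh = h_mmse S mu_h Sig_h y f) /\
  (* joint MAP decomposes *)
  (forall (y : 'cV[R[i]]_(lr * n)) (hh : 'cV[R[i]]_(lr * lt)) (fh : R),
     (forall (h : 'cV[R[i]]_(lr * lt)) (f : R),
        f_joint S mu_h Sig_h mu_f s2_f h f y
        <= f_joint S mu_h Sig_h mu_f s2_f hh fh y)
     <-> ((forall f : R, f_y_f S mu_h Sig_h y f * f_f mu_f s2_f f
                         <= f_y_f S mu_h Sig_h y fh * f_f mu_f s2_f fh)
          /\ hh = h_mmse S mu_h Sig_h y fh)).
Proof. by apply: main_sec. Qed.
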